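(* Let $G$ be a Polish group with a comeagre conjugacy class $C$. Then every element $g\in C$ is conjugate in $G$ to $g^{-1}$. *)

(* Defs.v *)
From HB Require Import structures.
From mathcomp Require Import all_boot all_order all_algebra.
From mathcomp Require Import all_classical all_reals all_analysis.
Set Implicit Arguments. Unset Strict Implicit. Unset Printing Implicit Defensive.
Import Order.TTheory GRing.Theory Num.Theory.
Local Open Scope classical_set_scope.
Local Open Scope ring_scope.

Definition topological_group (T : topologicalType)
  (mul : T -> T -> T) (inv : T -> T) (e : T) : Prop :=
  [/\ (forall x y z, mul x (mul y z) = mul (mul x y) z),
      (forall x, mul e x = x /\ mul x e = x),
      (forall x, mul (inv x) x = e /\ mul x (inv x) = e),
      continuous (fun p : T * T => mul p.1 p.2) &
      continuous inv].

Definition is_metric (R : realType) (T : Type) (d : T -> T -> R) : Prop :=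
  [/\ (forall x y, 0 <= d x y),
      (forall x y, d x y = 0 <-> x = y),
      (forall x y, d x y = d y x) &
      (forall x y z, d x z <= d x y + d y z)].

Definition metric_induces (R : realType) (T : topologicalType) (d : T -> T -> R)
  : Prop :=
  forall A : set T, open A <->
    (forall x, A x -> exists2 eps : R, 0 < eps & [set y | d x y < eps] `<=` A).

Definition metric_complete (R : realType) (T : topologicalType) (d : T -> T -> R)
  : Prop :=
  forall u : nat -> T,
    (forall eps : R, 0 < eps -> exists N, forall m n, (N <= m)%N -> (N <= n)%N ->
        d (u m) (u n) < eps) ->
    exists x : T, u @ \oo --> x.

Definition polish (R : realType) (T : topologicalType) : Prop :=
  (exists D : set T, countable D /\ dense D) /\
  (exists d : T -> T -> R, [/\ is_metric d, metric_induces d & metric_complete d]).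

Definition comeagre (T : topologicalType) (A : set T) : Prop :=
  exists U : nat -> set T, (forall n, open (U n) /\ dense (U n)) /\
    \bigcap_n U n `<=` A.

Definition conj_class (T : Type) (mul : T -> T -> T) (inv : T -> T) (g : T)
  : set T := [set mul (mul h g) (inv h) | h in [set: T]].

(* Main.v *)
Require Import Defs.
From mathcomp Require Import all_boot all_order all_algebra.
From mathcomp Require Import all_classical all_reals all_analysis.
From mathcomp Require Import lra.
Import Order.TTheory GRing.Theory Num.Theory.
Local Open Scope classical_set_scope.

Section Aux.
Local Open Scope ring_scope.

Lemma ball_open (R : realType) (T : topologicalType) (d : T -> T -> R) :
  is_metric d -> metric_induces d -> forall x eps, open [set y | d x y < eps].
Proof.
move=> [d0 dE dC dT] Hind x eps; apply/Hind => y /= Hy.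
exists (eps - d x y); first by rewrite subr_gt0.
move=> z /= hz; have := dT x y z; lra.
Qed.

Arguments ball_open {R T d}.

Lemma cvg_ball (R : realType) (T : topologicalType) (d : T -> T -> R) :
  is_metric d -> metric_induces d -> forall (u : nat -> T) (x : T),
  u @ \oo --> x -> forall eps, 0 < eps ->
  exists N, forall n, (N <= n)%N -> d x (u n) < eps.
Proof.
move=> Hm Hind u x Hu eps e0.
have : nbhs x [set y | d x y < eps].
  apply: open_nbhs_nbhs; split; first exact: ball_open.
  by case: Hm => _ dE _ _ /=; rewrite (proj2 (dE x x) erefl).
move=> /Hu [N _ HN]; exists N => n Hn; exact: HN.
Qed.

Arguments cvg_ball {R T d}.

Lemma baire (R : realType) (T : topologicalType) (d : T -> T -> R) (x0 : T) :
  is_metric d -> metric_induces d -> metric_complete d ->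
  forall V : nat -> set T, (forall n, open (V n) /\ dense (V n)) ->
  exists x, forall n, V n x.
Proof.
move=> Hm Hind Hc V HV.
have Hm' := Hm; case: Hm' => d0 dE dC dT.
have dxx : forall x, d x x = 0 by move=> x; exact: (proj2 (dE x x) erefl).
have step : forall np : nat * (T * R), exists q : T * R, 0 < np.2.2 ->
   [/\ 0 < q.2, q.2 <= np.2.2, q.2 <= (np.1.+1%:R)^-1 &
    [set y | d q.1 y < 2 * q.2] `<=` [set y | d np.2.1 y < np.2.2] `&` V np.1].
  case=> n [x r] /=.
  case: (pselect (0 < r)) => r0; last by exists (x0, 1).
  have [y [By Vy]] := (HV n).2 [set y | d x y < r]
     (ex_intro _ x (eq_ind_r (fun t => t < r) r0 (dxx x))) (ball_open Hm Hind x r).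
  have Op : open ([set y | d x y < r] `&` V n)
    by apply: openI; [exact: ball_open | exact: (HV n).1].
  have [eps e0 Heps] := (proj1 (Hind _) Op) y (conj By Vy).
  exists (y, Num.min (Num.min (eps / 2) r) (n.+1%:R^-1)) => _ /=.
  split.
  - by rewrite !lt_min r0 invr_gt0 ltr0n andbT divr_gt0.
  - by rewrite !ge_min lexx orbT.
  - by rewrite ge_min lexx orbT.
  - move=> z /= hz; apply: Heps => /=.
    have : Num.min (Num.min (eps / 2) r) (n.+1%:R^-1) <= eps / 2
      by rewrite !ge_min lexx.
    lra.
case: (choice step) => f Hf.
pose s := fix s n := if n is m.+1 then f (m, s m) else (x0, 1).
have sS : forall m, s m.+1 = f (m, s m) by [].
have s0 : s 0%N = (x0, 1) by [].
clearbody s.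
have pos : forall n, 0 < (s n).2.
  elim=> [|n IH]; first by rewrite s0 /= ltr01.
  by rewrite sS; case: (Hf (n, s n) IH).
have H : forall n, [/\ 0 < (s n.+1).2, (s n.+1).2 <= (s n).2,
    (s n.+1).2 <= (n.+1%:R)^-1 &
    [set y | d (s n.+1).1 y < 2 * (s n.+1).2] `<=`
      [set y | d (s n).1 y < (s n).2] `&` V n].
  by move=> n; rewrite sS; exact: (Hf (n, s n) (pos n)).
have nest1 : forall n, [set y | d (s n.+1).1 y < (s n.+1).2] `<=`
    [set y | d (s n).1 y < (s n).2].
  move=> n y /= hy; have [p _ _ Hs] := H n.
  have : d (s n.+1).1 y < 2 * (s n.+1).2 by rewrite /=; lra.
  by move/Hs => [].
have nestk : forall n k, [set y | d (s (n + k)%N).1 y < (s (n + k)%N).2] `<=`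
    [set y | d (s n).1 y < (s n).2].
  move=> n; elim=> [|k IH]; first by rewrite addn0.
  by move=> y hy; apply: IH; apply: nest1; rewrite -addnS.
have nest : forall n m, (n <= m)%N -> d (s n).1 (s m).1 < (s n).2.
  move=> n m nm; have := nestk n (m - n)%N (s (addn n (subn m n))).1.
  rewrite subnKC //= dxx; apply; exact: pos.
have [x Hx] : exists x : T, (fun n : nat => (s n).1) @ \oo --> x.
  apply: (Hc (fun n => (s n).1)) => eps e0.
  have [k Hk] := @ltr_add_invr R 0 (eps / 2) ltac:(by rewrite divr_gt0).
  exists k.+1 => m n hm hn.
  have [_ _ hr _] := H k.
  have h1 := nest _ _ hm; have h2 := nest _ _ hn.
  have := dT (s m).1 (s k.+1).1 (s n).1.
  rewrite dC in h1; rewrite add0r in Hk => Htri.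
  have hr2 : (s k.+1).2 < eps / 2 := le_lt_trans hr Hk. lra.
exists x => n.
have [rp _ _ Hs] := H n.
have [N HN] := cvg_ball Hm Hind _ _ Hx _ rp.
have h1 := nest n.+1 (maxn N n.+1) (leq_maxr _ _).
have h2 := HN (maxn N n.+1) (leq_maxl _ _).
have : d (s n.+1).1 x < 2 * (s n.+1).2.
  have := dT (s n.+1).1 (s (maxn N n.+1)).1 x.
  rewrite (dC x) in h2. lra.
by move/Hs => [].
Qed.

End Aux.

Theorem mainTheorem7 (R : realType) (T : topologicalType)
  (mul : T -> T -> T) (inv : T -> T) (e : T) :
  topological_group mul inv e -> polish R T ->
  forall g0 : T, comeagre (conj_class mul inv g0) ->
  forall g : T, conj_class mul inv g0 g ->
  exists h : T, mul (mul h g) (inv h) = inv g.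
Proof.
move=> [mA mid minv cmul cinv] [_ [d [Hm Hind Hc]]] g0 [U [HU HUC]] g [a _ Ha].
have inv_uniq : forall a b, mul a b = e -> inv a = b.
  move=> a' b H; rewrite -(proj2 (mid (inv a'))) -H mA (proj1 (minv a')).
  exact: (proj1 (mid b)).
have inv_inv : forall a, inv (inv a) = a.
  by move=> a'; apply: inv_uniq; exact: (proj1 (minv a')).
have inv_mul : forall a b, inv (mul a b) = mul (inv b) (inv a).
  move=> a' b; apply: inv_uniq.
  rewrite mA -(mA a' b (inv b)) (proj2 (minv b)) (proj2 (mid a')).
  exact: (proj2 (minv a')).
pose cj c y := mul (mul c y) (inv c).
have cj_inv : forall c y, inv (cj c y) = cj c (inv y).
  by move=> c y; rewrite /cj inv_mul inv_inv inv_mul mA.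
have cj_comp : forall c c' y, cj c (cj c' y) = cj (mul c c') y.
  by move=> c c' y; rewrite /cj inv_mul !mA.
have inv_e : inv e = e by apply: inv_uniq; exact: (proj1 (mid e)).
have cj_cancel : forall c y, cj (inv c) (cj c y) = y.
  move=> c y; rewrite cj_comp (proj1 (minv c)) /cj inv_e (proj2 (mid _)).
  exact: (proj1 (mid y)).
pose W n := U n `&` inv @^-1` U n.
have HW : forall n, open (W n) /\ dense (W n).
  move=> n; have [oU dU] := HU n.
  have oU' : open (inv @^-1` U n) by apply: open_comp => // x _; exact: cinv.
  split; first exact: openI.
  move=> O O0 oO.
  have oOU : open (O `&` U n) by exact: openI.
  have [y [Oy Uy]] := dU O O0 oO.
  have oP : open (inv @^-1` (O `&` U n))
    by apply: open_comp => // z _; exact: cinv.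
  have [z [[Oz Uz] Uz']] : inv @^-1` (O `&` U n) `&` U n !=set0.
    by apply: dU => //; exists (inv y); rewrite /= inv_inv.
  exists (inv z); split => //; split => //=; by rewrite inv_inv.
have [x Hx] := @baire R T d e Hm Hind Hc W HW.
have [h _ Hh] := HUC x (fun n _ => (Hx n).1).
have [k _ Hk] := HUC (inv x) (fun n _ => (Hx n).2).
have Hh' : cj h g0 = x := Hh.
have Hk' : cj k g0 = inv x := Hk.
have Ha' : cj a g0 = g := Ha.
suff : exists h0, cj h0 g = inv g by [].
clearbody cj.
have e1 : inv g0 = cj (mul (inv h) k) g0.
  by rewrite -cj_comp Hk' -Hh' cj_inv cj_cancel.
exists (mul (mul a (mul (inv h) k)) (inv a)).
rewrite -Ha' cj_inv e1 -cj_comp cj_cancel.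
by rewrite cj_comp.
Qed.
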